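(* Let $IS\in\{\Box,\blacksquare\}^2$ and let $\tau$ be a correct compositional translation from $\mathrm{SYNCSIMPLE}$ into $\mathrm{LOCKSIMPLE}_{2,IS}$. Then $\tau$ does not have blocking type $(P_1P_1,P_1)$, nor $(P_1,P_1P_1)$, nor $(P_1,P_1)$.
   Context: $\mathrm{SYNCSIMPLE}$: subprocesses $\mathcal{U} ::= \checkmark \mid 0 \mid\, !\mathcal{U} \mid\, ?\mathcal{U}$; processes are finite parallel compositions ($\mid$ associative, commutative, $0$ a unit). Reduction: $!\mathcal{U}_1\mid ?\mathcal{U}_2\mid \mathcal{P}\to \mathcal{U}_1\mid\mathcal{U}_2\mid\mathcal{P}$. Successful: of form $\checkmark\mid\mathcal{P}$; may-convergent: reduces to a successful process; must-convergent: every reachable process is may-convergent. $\mathrm{LOCKSIMPLE}_{k,IS}$ ($IS\in\{\Box,\blacksquare\}^k$, $\Box$ empty, $\blacksquare$ full): subprocesses are words over $\{P_1,T_1,\dots,P_k,T_k\}$ followed by $0$ or $\checkmark$; states $(\mathcal{P},C)$ reduce by $(P_i\mathcal{U}\mid\mathcal{P},C)\to(\mathcal{U}\mid\mathcal{P},C[C_i:=\blacksquare])$ only if $C_i=\Box$, and $(T_i\mathcal{U}\mid\mathcal{P},C)\to(\mathcal{U}\mid\mathcal{P},C[C_i:=\Box])$ always. Success = process contains $\checkmark$; a process $\mathcal{P}$ is may/must-convergent iff the state $(\mathcal{P},IS)$ is. A compositional translation $\tau$ is given by words $\tau(!),\tau(?)$ with $\tau(0)=0$, $\tau(\checkmark)=\checkmark$,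 $\tau(!\mathcal{U})=\tau(!)\tau(\mathcal{U})$, $\tau(?\mathcal{U})=\tau(?)\tau(\mathcal{U})$, $\tau$ commuting with $\mid$; correct = preserves and reflects may- and must-convergence. Blocking type: for a word $S$, run $S$ as a single subprocess from $IS$; if it gets stuck at an occurrence of $P_i$, that occurrence ends the blocking prefix; if it is the first symbol from $\{P_i,T_i\}$ in $S$ the blocking type is $P_i$, otherwise the blocking prefix has form $R_1P_iR_2P_i$ with $R_2$ containing no $P_i,T_i$, and the blocking type is $P_iP_i$. $\tau$ has blocking type $(W_1,W_2)$ if $\tau(!)$ has type $W_1$ and $\tau(?)$ type $W_2$. *)

(* Defs.v *)
From Stdlib Require Import List Permutation Relations.
From mathcomp Require Import all_boot.
Set Implicit Arguments.
Unset Strict Implicit.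
Unset Printing Implicit Defensive.

Inductive ssub : Type :=
| SOk : ssub
| SNil : ssub
| SOut : ssub -> ssub
| SIn : ssub -> ssub.

(* processes: finite parallel compositions, as lists (| is AC, up to
   permutation; 0 as unit is harmless since 0-components are inert) *)
Definition sproc := list ssub.

Definition sstep (P Q : sproc) : Prop :=
  exists u1 u2 R, Permutation P (SOut u1 :: SIn u2 :: R) /\ Q = u1 :: u2 :: R.

Definition sreach := clos_refl_trans sproc sstep.

Definition ssuccessful (P : sproc) : Prop := In SOk P.

Definition smay (P : sproc) : Prop := exists Q, sreach P Q /\ ssuccessful Q.
Definition smust (P : sproc) : Prop := forall Q, sreach P Q -> smay Q.

(* lock index i : 'I_k stands for the paper's index i+1 *)
Inductive lsym (k : nat) : Type :=
| LP : 'I_k -> lsym k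
| LT : 'I_k -> lsym k.

Definition lsym_idx k (a : lsym k) : 'I_k :=
  match a with LP i => i | LT i => i end.

Inductive lsub (k : nat) : Type :=
| LOk : lsub k
| LNil : lsub k
| LPre : lsym k -> lsub k -> lsub k.

Definition lproc k := list (lsub k).

(* lock states: true = full (black square), false = empty (white square) *)
Definition lstate k := 'I_k -> bool.

Definition upd k (C : lstate k) (i : 'I_k) (b : bool) : lstate k :=
  fun j => if j == i then b else C j.

Definition lstep k (s t : lproc k * lstate k) : Prop :=
  let (P, C) := s in let (Q, C') := t in
  exists a u R, Permutation P (LPre a u :: R) /\ Q = u :: R /\
    match a with
    | LP i => C i = false /\ C' = upd C i true
    | LT i => C' = upd C i false
    end.

Definition lreach k := clos_refl_trans (lproc k * lstate k) (@lstep k).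

Definition lsuccessful k (s : lproc k * lstate k) : Prop := In (LOk k) s.1.

Definition lmay_state k (s : lproc k * lstate k) : Prop :=
  exists t, lreach s t /\ lsuccessful t.
Definition lmust_state k (s : lproc k * lstate k) : Prop :=
  forall t, lreach s t -> lmay_state t.

Definition lmay k (IS : lstate k) (P : lproc k) := lmay_state (P, IS).
Definition lmust k (IS : lstate k) (P : lproc k) := lmust_state (P, IS).

Fixpoint prepend k (w : list (lsym k)) (u : lsub k) : lsub k :=
  match w with nil => u | a :: w' => LPre a (prepend w' u) end.

Fixpoint tau_sub k (wout win : list (lsym k)) (u : ssub) : lsub k :=
  match u with
  | SOk => LOk k
  | SNil => LNil k
  | SOut u' => prepend wout (tau_sub wout win u')
  | SIn u' => prepend win (tau_sub wout win u')
  end.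

Definition tau k (wout win : list (lsym k)) (P : sproc) : lproc k :=
  map (tau_sub wout win) P.

Definition correct k (IS : lstate k) (wout win : list (lsym k)) : Prop :=
  forall P : sproc,
    (smay P <-> lmay IS (tau wout win P)) /\
    (smust P <-> lmust IS (tau wout win P)).

Inductive btype (k : nat) : Type :=
| BP : 'I_k -> btype k
| BPP : 'I_k -> btype k.

(* run a word as a single subprocess from lock state C; if it gets stuck at
   an occurrence of P_i, return the prefix before that occurrence and i *)
Fixpoint block k (C : lstate k) (S : list (lsym k))
  : option (list (lsym k) * 'I_k) :=
  match S with
  | nil => None
  | LP i :: S' =>
      if C i then Some (nil, i)
      else option_map (fun r => (LP i :: r.1, r.2)) (block (upd C i true) S')
  | LT i :: S' =>
      option_map (fun r => (LT i :: r.1, r.2)) (block (upd C i false) S')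
  end.

Definition blocking_type k (IS : lstate k) (S : list (lsym k))
  : option (btype k) :=
  match block IS S with
  | None => None
  | Some (pre, i) =>
      if has (fun a => lsym_idx a == i) pre then Some (BPP i) else Some (BP i)
  end.

Definition has_blocking_type k (IS : lstate k) (wout win : list (lsym k))
  (W1 W2 : btype k) : Prop :=
  blocking_type IS wout = Some W1 /\ blocking_type IS win = Some W2.

(* Main.v *)
Require Import Defs.
From Stdlib Require Import List Permutation Relations.
From mathcomp Require Import all_boot.
Set Implicit Arguments.
Unset Strict Implicit.

Fixpoint runC k (C : lstate k) (w : list (lsym k)) : lstate k :=
  match w with
  | nil => C
  | LP i :: w' => runC (upd C i true) w'
  | LT i :: w' => runC (upd C i false) w'
  end.

Lemma run_reach k (w : list (lsym k)) : forall C pre i,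
  block C w = Some (pre, i) -> forall u P R,
  Permutation P (prepend w u :: R) ->
  exists rest Q, lreach (P, C) (Q, runC C pre) /\
    Permutation Q (LPre (LP i) (prepend rest u) :: R) /\
    runC C pre i = true /\ w = pre ++ LP i :: rest.
Proof.
elim: w => [|a w IH] C pre i //=.
case: a => j.
- case Cj: (C j).
  + case=> <- <- u P R HP. exists w, P. split; [apply rt_refl|].
    simpl. split; [done|]. split; done.
  + case Hb: (block (upd C j true) w) => [[pre' i']|] //= [<- <-] u P R HP.
    have [rest [Q [H1 [H2 [H3 H4]]]]] := IH _ _ _ Hb u _ R (Permutation_refl _).
    exists rest, Q. split.
    * eapply rt_trans; [|exact H1]. apply rt_step. rewrite /lstep /=.
      exists (LP j), (prepend w u), R. split; [exact HP| split; [done| split; done]].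
    * simpl. rewrite H4. split; [done|split; done].
- case Hb: (block (upd C j false) w) => [[pre' i']|] //= [<- <-] u P R HP.
  have [rest [Q [H1 [H2 [H3 H4]]]]] := IH _ _ _ Hb u _ R (Permutation_refl _).
  exists rest, Q. split.
  * eapply rt_trans; [|exact H1]. apply rt_step. rewrite /lstep /=.
    exists (LT j), (prepend w u), R. split; [exact HP| split; done].
  * simpl. rewrite H4. split; [done|split; done].
Qed.

Lemma runC_notouch k (pre : list (lsym k)) j : forall C,
  ~~ has (fun a => lsym_idx a == j) pre -> runC C pre j = C j.
Proof.
elim: pre => [|a pre IH] C //=.
rewrite negb_or => /andP [Ha Hp].
case: a Ha => i /= Ha; rewrite IH // /upd eq_sym (negbTE Ha) //.
Qed.

Lemma block_P k (j : 'I_k) rest (pre : list (lsym k)) : forall C,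
  ~~ has (fun a => lsym_idx a == j) pre -> C j = true ->
  exists pre' i, block C (pre ++ LP j :: rest) = Some (pre', i) /\
    ~~ has (fun a => lsym_idx a == j) pre'.
Proof.
elim: pre => [|a pre IH] C /=.
- move=> _ ->. by exists nil, j.
- rewrite negb_or => /andP [Ha Hp] Cj.
  case: a Ha => i /= Ha.
  + case: (C i).
    * by exists nil, i.
    * have Cj' : upd C i true j = true by rewrite /upd eq_sym (negbTE Ha).
      have [pre' [i' [-> H]]] := IH _ Hp Cj'.
      exists (LP i :: pre'), i'. by rewrite /= negb_or Ha H.
  + have Cj' : upd C i false j = true by rewrite /upd eq_sym (negbTE Ha).
    have [pre' [i' [-> H]]] := IH _ Hp Cj'.
    exists (LT i :: pre'), i'. by rewrite /= negb_or Ha H.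
Qed.

Definition stuckc k (C : lstate k) (x : lsub k) :=
  x = LNil k \/ exists i v, x = LPre (LP i) v /\ C i = true.

Lemma stuck_nomay k (Q : lproc k) C :
  (forall x, In x Q -> stuckc C x) -> ~ lmay_state (Q, C).
Proof.
move=> H [t [Hr Hs]].
apply clos_rt_rt1n in Hr.
inversion Hr as [|y z Hy Hz]; subst.
- have := H _ Hs. case => [//|[i [v [//]]]].
- destruct y as [Q' C'].
  destruct Hy as [a [u [R [HP [_ Ha]]]]].
  have := H _ (Permutation_in _ (Permutation_sym HP) (in_eq _ _)).
  case => [//|[i [v [[Ea _] Ci]]]]. subst a.
  rewrite Ci in Ha. by case: Ha.
Qed.

Lemma deadlock k (j : 'I_k) (C : lstate k) w1 w2 pre1 pre2 u1 u2 P :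
  block C w1 = Some (pre1, j) -> block C w2 = Some (pre2, j) ->
  ~~ has (fun a => lsym_idx a == j) pre2 ->
  Permutation P (prepend w1 u1 :: prepend w2 u2 :: nil) ->
  ~ lmust_state (P, C).
Proof.
move=> B1 B2 H2 HP Hm.
have [rest1 [Q1 [R1 [P1 [C1 E1]]]]] := run_reach B1 HP.
have [rest2 E2] : exists rest2, w2 = pre2 ++ LP j :: rest2.
{ have [rest [Q [_ [_ [_ E]]]]] := run_reach B2 (Permutation_refl (prepend w2 u2 :: nil)).
  by exists rest. }
have [pre' [i' [B2' H']]] := block_P rest2 H2 C1.
rewrite -E2 in B2'.
have P1' : Permutation Q1 (prepend w2 u2 :: LPre (LP j) (prepend rest1 u1) :: nil).
{ eapply Permutation_trans; [exact P1|]. apply perm_swap. }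
have [rest3 [Q3 [R3 [P3 [C3 E3]]]]] := run_reach B2' P1'.
apply: (stuck_nomay (Q := Q3) (C := runC (runC C pre1) pre')); last first.
{ apply: Hm. eapply rt_trans; [exact R1| exact R3]. }
move=> x Hx. have := Permutation_in _ P3 Hx.
case=> [<-|[<-|//]]; right.
- by exists i', (prepend rest3 u2).
- exists j, (prepend rest1 u1). split; [done|]. by rewrite runC_notouch.
Qed.

Lemma bt_BP k (IS : lstate k) w j : blocking_type IS w = Some (BP j) ->
  exists pre, block IS w = Some (pre, j) /\ ~~ has (fun a => lsym_idx a == j) pre.
Proof.
rewrite /blocking_type. case: (block IS w) => [[pre i]|] //.
case: ifP => // Hh [<-]. exists pre. by rewrite Hh.
Qed.

Lemma bt_any k (IS : lstate k) w b j :
  blocking_type IS w = Some b -> (b = BP j \/ b = BPP j) ->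
  exists pre, block IS w = Some (pre, j).
Proof.
rewrite /blocking_type. case: (block IS w) => [[pre i]|] //.
case: ifP => _ [<-] [] // [->]; by exists pre.
Qed.

Lemma smust_ex : smust (SOut SOk :: SIn SNil :: nil).
Proof.
set I := fun Q : sproc => Permutation Q (SOut SOk :: SIn SNil :: nil) \/
                          Permutation Q (SOk :: SNil :: nil).
have step : forall Q Q', sstep Q Q' -> I Q -> I Q'.
{ move=> Q Q' [u1 [u2 [R [HP ->]]]] [HQ|HQ].
  - have HP' := Permutation_trans (Permutation_sym HP) HQ.
    have Hl := Permutation_length HP'. move: HP' Hl; case: R HP => [|? ?] //= HP HP' _.
    have A := Permutation_in _ HP' (in_eq _ _).
    have B := Permutation_in _ HP' (List.in_cons _ _ _ (in_eq _ _)).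
    case: A => [[<-]|[//|[]]]. case: B => [//|[[<-]|[]]].
    right. apply Permutation_refl.
  - have A := Permutation_in _ (Permutation_trans (Permutation_sym HP) HQ) (in_eq _ _).
    by case: A => [|[|[]]]. }
have gen : forall Q Q', sreach Q Q' -> I Q -> I Q'.
{ move=> Q Q' HR. elim: HR => [x y Hxy|x|x y z _ IH1 _ IH2] HI; [exact: step Hxy HI|done|exact: IH2 (IH1 HI)]. }
move=> Q HR.
have HI : I Q by apply: (gen _ _ HR); left; apply Permutation_refl.
case: HI => HQ.
- exists (SOk :: SNil :: nil). split; last by left.
  apply rt_step. exists SOk, SNil, nil. split; [exact HQ|done].
- exists Q. split; [apply rt_refl|]. exact (Permutation_in _ (Permutation_sym HQ) (in_eq _ _)).
Qed.

Theorem proposition5p10 (IS : 'I_2 -> bool) (wout win : list (lsym 2)) :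
  correct IS wout win ->
  ~ has_blocking_type IS wout win (BPP ord0) (BP ord0) /\
  ~ has_blocking_type IS wout win (BP ord0) (BPP ord0) /\
  ~ has_blocking_type IS wout win (BP ord0) (BP ord0).
Proof.
move=> Hc.
have Hm : lmust_state (k:=2) (prepend wout (LOk 2) :: prepend win (LNil 2) :: nil, IS).
{ exact: (proj1 (proj2 (Hc _)) smust_ex). }
split; [|split]; move=> [H1 H2].
- have [pre1 B1] := bt_any H1 (or_intror erefl).
  have [pre2 [B2 N2]] := bt_BP H2.
  exact: (deadlock B1 B2 N2 (Permutation_refl _) Hm).
- have [pre1 B1] := bt_any H2 (or_intror erefl).
  have [pre2 [B2 N2]] := bt_BP H1.
  exact: (deadlock B1 B2 N2 (perm_swap _ _ _) Hm).
- have [pre1 B1] := bt_any H1 (or_introl erefl).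
  have [pre2 [B2 N2]] := bt_BP H2.
  exact: (deadlock B1 B2 N2 (Permutation_refl _) Hm).
Qed.
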